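(* Let $G$ be a graph with edge set $E$, $k\ge1$, suppose $M_k(G)$ is a connected matroid, let $B$ be a base of $M_k(G)$ and $e\in B$, and let $A$ be the component of $G\langle B\rangle$ containing $e$. Suppose $A$ has exactly one cycle and $e$ lies on that cycle (i.e. $e\in E(\lfloor A\rfloor)$). Then $A\setminus e$ is a tree and the fundamental cocircuit $K(e,B)$ equals $\{e\}\cup\{u\in E\setminus B: u\text{ has at least one end-vertex in } V(A)\}$.
   Context: Graphs are finite, may have loops and parallel edges, and have no isolated vertices; $A\setminus e$ deletes the edge $e$ and keeps all vertices. A leaf is a vertex incident to exactly one edge, which is not a loop. For $X\subseteq E$, $G\langle X\rangle$ is the subgraph with edge set $X$ and vertex set the vertices incident to $X$. For $k\ge0$, $M_k(G)$ is the matroid on $E$ whose circuits are the inclusion-minimal members of $\{C\subseteq E:C\neq\emptyset,\ |C|=|V(G\langle C\rangle)|+k\}$. A matroid is connected if its ground set has at least two elements and every two elements lie in a common circuit. For a base $B$ and $e\in B$, $K(e,B)$ is the unique cocircuit $K$ with $K\cap B=\{e\}$. For a connected graph $A$ containing a cycle, its kernel $\lfloor A\rfloor$ is the subgraph obtained by repeatedly deleting leaves (with their incident edges) until no leaf remains. *)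

(* Defs.v *)
(* A graph is given by finite types V (vertices) and E (edges)
   and an endpoint map ends : E -> V * V; loops (ends x = (v,v)) and parallel
   edges are allowed. *)
From mathcomp Require Import all_boot.
Set Implicit Arguments. Unset Strict Implicit. Unset Printing Implicit Defensive.

Section Graphs.
Variables (V E : finType) (ends : E -> V * V).

Definition endv (x : E) : {set V} := [set (ends x).1; (ends x).2].

Definition no_isolated : Prop := forall v : V, exists x : E, v \in endv x.

Definition VX (X : {set E}) : {set V} := \bigcup_(x in X) endv x.

Definition vadj (X : {set E}) : rel V :=
  fun u w => [exists x in X, (ends x == (u, w)) || (ends x == (w, u))].

Definition gconnected (W : {set V}) (X : {set E}) : bool :=
  [forall u in W, forall w in W, connect (vadj X) u w].

(* degree of v in the subgraph with edges X (a loop counts twice) *)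
Definition deg (X : {set E}) (v : V) : nat :=
  #|[set x in X | (ends x).1 == v]| + #|[set x in X | (ends x).2 == v]|.

Definition is_cycle (C : {set E}) : bool :=
  [&& C != set0, gconnected (VX C) C & [forall v in VX C, deg C v == 2]].

Definition is_tree (W : {set V}) (X : {set E}) : bool :=
  [&& VX X \subset W, gconnected W X &
      [forall C : {set E}, (C \subset X) ==> ~~ is_cycle C]].

Definition comp_edges (B : {set E}) (e : E) : {set E} :=
  [set f in B | connect (vadj B) (ends e).1 (ends f).1].

(* The matroid M_k(G) on E, given by its circuits *)
Definition circ0 (k : nat) (C : {set E}) : bool :=
  (C != set0) && (#|C| == #|VX C| + k).
Definition circuit (k : nat) (C : {set E}) : bool :=
  circ0 k C && [forall C' : {set E}, (C' \proper C) ==> ~~ circ0 k C'].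
Definition indep (k : nat) (I : {set E}) : bool :=
  [forall C : {set E}, circuit k C ==> ~~ (C \subset I)].
Definition base (k : nat) (B : {set E}) : bool :=
  indep k B && [forall I : {set E}, indep k I ==> ~~ (B \proper I)].
Definition meets_all_bases (k : nat) (D : {set E}) : bool :=
  (D != set0) && [forall B : {set E}, base k B ==> (D :&: B != set0)].
Definition cocircuit (k : nat) (D : {set E}) : bool :=
  meets_all_bases k D &&
  [forall D' : {set E}, (D' \proper D) ==> ~~ meets_all_bases k D'].
Definition mconnected (k : nat) : Prop :=
  1 < #|E| /\ forall x y : E, exists C : {set E}, [&& circuit k C, x \in C & y \in C].

End Graphs.

(* Main.v *)
Require Import Defs.
From mathcomp Require Import all_boot.
From mathcomp Require Import zify.
Set Implicit Arguments. Unset Strict Implicit. Unset Printing Implicit Defensive.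

Section G.
Variables (V E : finType) (ends : E -> V * V).
Local Notation VX := (VX ends).
Local Notation endv := (endv ends).
Local Notation deg := (deg ends).
Local Notation vadj := (vadj ends).

Lemma VXP v (X : {set E}) : reflect (exists2 x, x \in X & v \in endv x) (v \in VX X).
Proof. exact: bigcupP. Qed.

Lemma VXU (X Y : {set E}) : VX (X :|: Y) = VX X :|: VX Y.
Proof. exact: bigcup_setU. Qed.

Lemma VXS (X Y : {set E}) : X \subset Y -> VX X \subset VX Y.
Proof.
move=> XY; apply/subsetP=> v /VXP [x xX vx]; apply/VXP; exists x => //.
exact: (subsetP XY).
Qed.

Lemma endv_VX x (X : {set E}) : x \in X -> endv x \subset VX X.
Proof. by move=> xX; apply/subsetP=> v vx; apply/VXP; exists x. Qed.

Lemma endv1 x : (ends x).1 \in endv x. Proof. by rewrite /Defs.endv !inE eqxx. Qed.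
Lemma endv2 x : (ends x).2 \in endv x. Proof. by rewrite /Defs.endv !inE eqxx orbT. Qed.
Lemma endvP v x : v \in endv x = ((ends x).1 == v) || ((ends x).2 == v).
Proof. by rewrite /Defs.endv !inE ![v == _]eq_sym. Qed.

Lemma VX0 : VX set0 = set0.
Proof. by apply/setP=> v; rewrite inE; apply/VXP=> [[x]]; rewrite inE. Qed.

Lemma VX_card0 (X : {set E}) : X != set0 -> 0 < #|VX X|.
Proof.
case/set0Pn=> x xX; apply/card_gt0P; exists (ends x).1; apply/VXP; exists x => //.
exact: endv1.
Qed.

Lemma VX_sub_card (X Y : {set E}) : X \subset Y -> #|VX X| <= #|VX Y|.
Proof. by move/VXS/subset_leq_card. Qed.

Lemma VX_submod (X Y : {set E}) : #|VX (X :|: Y)| + #|VX (X :&: Y)| <= #|VX X| + #|VX Y|.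
Proof.
rewrite -[#|VX X| + _]cardsUI VXU leq_add2l; apply: subset_leq_card.
by rewrite subsetI !VXS // ?subsetIl ?subsetIr.
Qed.

Definition cnt (x : E) (v : V) : nat := ((ends x).1 == v) + ((ends x).2 == v).

Lemma degE (Z : {set E}) v : deg Z v = \sum_(x in Z) cnt x v.
Proof.
rewrite /Defs.deg /cnt big_split /= -!sum1_card.
by congr (_ + _); rewrite [RHS]big_mkcond [LHS]big_mkcond /=; apply: eq_bigr => x _;
  rewrite !inE; case: (x \in Z); case: eqP.
Qed.

Lemma sum_eq_in (K : {set V}) y : \sum_(x in K) (y == x : nat) = (y \in K).
Proof.
case yK: (y \in K).
  rewrite (bigD1 y) //= eqxx big1 // => x /andP[_ xy].
  by rewrite eq_sym (negPf xy).
by rewrite big1 // => x xK; case: eqP => // yx; rewrite yx xK in yK.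
Qed.

Lemma sum_cnt x (K : {set V}) : \sum_(v in K) cnt x v = ((ends x).1 \in K) + ((ends x).2 \in K).
Proof. by rewrite big_split /= !sum_eq_in. Qed.

Lemma handshake (Z : {set E}) : \sum_(v in VX Z) deg Z v = 2 * #|Z|.
Proof.
under eq_bigr do rewrite degE.
rewrite exchange_big /= -sum1_card big_distrr /=; apply: eq_bigr => x xZ.
rewrite sum_cnt muln1 !(subsetP (endv_VX xZ)) ?endv1 ?endv2 //.
Qed.

Lemma deg_gt0 (Z : {set E}) v : v \in VX Z -> 0 < deg Z v.
Proof.
case/VXP=> x xZ; rewrite endvP degE (bigD1 x) //= /cnt => h.
by apply: (leq_trans _ (leq_addr _ _)); case/orP: h => /eqP->; rewrite eqxx ?addn1.
Qed.

End G.

Section M.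
Variables (V E : finType) (ends : E -> V * V) (k : nat) (hk : 0 < k).
Local Notation VX := (VX ends).
Local Notation endv := (endv ends).

Definition sparse (I : {set E}) := forall X : {set E}, X \subset I -> #|X| < #|VX X| + k.

Lemma circ0_sub (X : {set E}) : #|VX X| + k <= #|X| -> exists2 Y : {set E}, Y \subset X & circ0 ends k Y.
Proof.
move: {2}#|X| (erefl #|X|) => n; elim: n X => [|n IH] X cX h.
  by move: h; rewrite cX; lia.
have [eqX|neX] := eqVneq #|X| (#|VX X| + k).
  exists X => //; rewrite /circ0 eqX eqxx andbT; apply/set0Pn.
  by apply/card_gt0P; rewrite eqX; lia.
have /card_gt0P [x xX] : 0 < #|X| by rewrite cX.
have c1 := cardsD1 x X; rewrite xX in c1.
have h1 : #|X :\ x| = n by lia.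
have h2 : #|VX (X :\ x)| + k <= #|X :\ x|.
  have := VX_sub_card ends (subD1set X x); lia.
have [Y YX cY] := IH _ h1 h2.
by exists Y => //; apply: subset_trans YX (subD1set _ _).
Qed.

Lemma circ0_circuit (Y : {set E}) : circ0 ends k Y -> exists2 C : {set E}, C \subset Y & circuit ends k C.
Proof.
move=> cY.
have exP : exists n, [exists C : {set E}, [&& C \subset Y, circ0 ends k C & #|C| == n]].
  by exists #|Y|; apply/existsP; exists Y; rewrite subxx cY eqxx.
case: (ex_minnP exP) => n /existsP [C /and3P [CY cC /eqP cn]] min.
exists C => //; rewrite /circuit cC /=; apply/forallP=> C'; apply/implyP=> pC.
apply/negP=> cC'.
have := min #|C'|; rewrite -cn.
have -> : [exists C0 : {set E}, [&& C0 \subset Y, circ0 ends k C0 & #|C0| == #|C'|]].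
  apply/existsP; exists C'; rewrite cC' eqxx andbT.
  by rewrite andbT; apply: subset_trans (proper_sub pC) CY.
move=> /(_ isT); have := proper_card pC; lia.
Qed.

Lemma indep_sparse (I : {set E}) : indep ends k I <-> sparse I.
Proof.
split.
  move=> hI X XI; rewrite ltnNge; apply/negP=> h.
  have [Y YX /circ0_circuit [C CY cC]] := circ0_sub h.
  move/forallP: hI => /(_ C); rewrite cC /= => /negP; apply.
  exact: subset_trans CY (subset_trans YX XI).
move=> hI; apply/forallP=> C; apply/implyP=> /andP [/andP [_ /eqP cC] _].
by apply/negP=> /hI; rewrite cC ltnn.
Qed.

Lemma baseP (B : {set E}) : base ends k B <->
  (sparse B /\ forall I : {set E}, sparse I -> ~~ (B \proper I)).
Proof.
rewrite /base; split.
  case/andP=> /indep_sparse hB /forallP hm; split=> // I /indep_sparse hI.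
  by move: (hm I); rewrite hI.
case=> /indep_sparse -> hm; apply/forallP=> I; apply/implyP=> /indep_sparse.
exact: hm.
Qed.

Lemma sparse_sub (I J : {set E}) : I \subset J -> sparse J -> sparse I.
Proof. by move=> IJ hJ X XI; apply: hJ; apply: subset_trans XI IJ. Qed.

Lemma not_sparse (I : {set E}) : ~ sparse I -> exists2 X : {set E}, X \subset I & #|VX X| + k <= #|X|.
Proof.
move=> h.
case: (boolP [exists X : {set E}, (X \subset I) && (#|VX X| + k <= #|X|)]).
  by case/exists_inP=> X ? ?; exists X.
move/exists_inPn=> h'; exfalso; apply: h => X /h'; by rewrite -ltnNge.
Qed.

Lemma tight_span (B : {set E}) g : sparse B -> ~ sparse (g |: B) ->
  exists T : {set E}, [/\ T \subset B, endv g \subset VX T & #|VX T| + k <= #|T| + 1].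
Proof.
move=> hB /not_sparse [X XgB hX].
have gX : g \in X.
  apply/negPn/negP=> gX.
  have XB : X \subset B.
    apply/subsetP=> x xX; move: (subsetP XgB x xX); rewrite !inE.
    case: eqP => [xg _|//]; by rewrite -xg xX in gX.
  have := hB X XB; lia.
have TB : X :\ g \subset B.
  by apply/subsetP=> x /setD1P [xg xX]; move: (subsetP XgB x xX);
    rewrite !inE (negPf xg).
have cX := cardsD1 g X; rewrite gX in cX.
have eX : X = g |: (X :\ g) by rewrite setD1K.
have hVX : VX X = endv g :|: VX (X :\ g).
  by rewrite {1}eX VXU /Defs.VX big_set1.
exists (X :\ g); split => //; last first.
  have := subset_leq_card (VXS ends (subD1set X g)); lia.
apply/negPn/negP=> ns.
have : #|VX (X :\ g)| < #|VX X|.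
  apply: proper_card; rewrite hVX; apply/properP; split; first exact: subsetUr.
  case/subsetPn: ns => v vg vn; exists v => //; by rewrite inE vg.
have := hB _ TB; lia.
Qed.

Lemma tight_union (B T1 T2 : {set E}) : sparse B -> T1 \subset B -> T2 \subset B ->
  #|VX T1| + k <= #|T1| + 1 -> #|VX T2| + k <= #|T2| + 1 ->
  #|VX (T1 :|: T2)| + k <= #|T1 :|: T2| + 1.
Proof.
move=> hB T1B T2B h1 h2.
have h3 := hB (T1 :&: T2) (subset_trans (subsetIl _ _) T1B).
have := cardsUI T1 T2; have := VX_submod ends T1 T2; lia.
Qed.

End M.

Section C.
Variables (V E : finType) (ends : E -> V * V).
Local Notation VX := (VX ends).
Local Notation endv := (endv ends).
Local Notation deg := (deg ends).
Local Notation vadj := (vadj ends).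
Local Notation cnt := (cnt ends).

Lemma vadj_sym (X : {set E}) : symmetric (vadj X).
Proof.
move=> u w; apply/exists_inP/exists_inP => [[x xX h]|[x xX h]]; exists x => //;
  by rewrite orbC.
Qed.

Lemma vadj_edge (X : {set E}) x : x \in X -> vadj X (ends x).1 (ends x).2.
Proof. by move=> xX; apply/exists_inP; exists x => //; rewrite -surjective_pairing eqxx. Qed.

Lemma vadjP (X : {set E}) u w : vadj X u w ->
  exists2 x, x \in X & ((ends x).1 = u /\ (ends x).2 = w) \/ ((ends x).1 = w /\ (ends x).2 = u).
Proof.
case/exists_inP=> x xX /orP [] /eqP h; exists x => //; rewrite h; by [left|right].
Qed.

Lemma connect_mono (X Y : {set E}) u w : X \subset Y -> connect (vadj X) u w -> connect (vadj Y) u w.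
Proof.
move=> XY; apply: connect_sub => x y /exists_inP [z zX h]; apply: connect1.
by apply/exists_inP; exists z => //; exact: (subsetP XY).
Qed.

Lemma connect_edge (X : {set E}) u x : x \in X ->
  connect (vadj X) u (ends x).1 = connect (vadj X) u (ends x).2.
Proof.
move=> xX; apply/idP/idP => h; apply: (connect_trans h); apply: connect1.
  exact: vadj_edge.
by rewrite vadj_sym; apply: vadj_edge.
Qed.

Lemma connect_VX (X : {set E}) a x : connect (vadj X) a x -> x = a \/ x \in VX X.
Proof.
case/connectP=> p; elim/last_ind: p x => [|p y _] x.
  by move=> _ ->; left.
rewrite rcons_path last_rcons => /andP [_ /vadjP [z zX h]] ->; right.
apply/VXP; exists z => //; case: h => -[h1 h2]; [rewrite -h2; exact: endv2|rewrite -h1; exact: endv1].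
Qed.

Lemma cnt_pos x v : v \in endv x -> 0 < cnt x v.
Proof. by rewrite endvP /cnt => /orP [] /eqP ->; rewrite eqxx // addn1. Qed.

Lemma cnt0 x v : v \notin endv x -> cnt x v = 0.
Proof. by rewrite endvP /cnt negb_or => /andP [/negPf -> /negPf ->]. Qed.

Lemma deg_ge1 (Z : {set E}) x v : x \in Z -> cnt x v <= deg Z v.
Proof. by move=> xZ; rewrite degE (bigD1 x) //= leq_addr. Qed.

Lemma deg_ge2 (Z : {set E}) x y v : x \in Z -> y \in Z -> x != y -> cnt x v + cnt y v <= deg Z v.
Proof.
move=> xZ yZ xy; rewrite degE (bigD1 x) //= leq_add2l (bigD1 y) /= ?leq_addr //.
by rewrite yZ eq_sym xy.
Qed.

Lemma deg_sub (Z : {set E}) e v : e \in Z -> deg Z v = cnt e v + deg (Z :\ e) v.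
Proof.
move=> eZ; rewrite !degE (bigD1 e) //=; congr (_ + _).
by apply: eq_bigl => x; rewrite in_setD1 andbC.
Qed.

Definition Pmd (Z : {set E}) := (Z != set0) && [forall v in VX Z, 1 < deg Z v].

Lemma L_core (Z : {set E}) : Z != set0 -> #|VX Z| <= #|Z| -> exists2 Z' : {set E}, Z' \subset Z & Pmd Z'.
Proof.
move: {2}#|Z| (erefl #|Z|) => n; elim: n Z => [|n IH] Z cZ Z0 h.
  by move: Z0; rewrite -cards_eq0 cZ.
case PZ: (Pmd Z); first by exists Z.
move: PZ; rewrite /Pmd Z0 /= => /forall_inPn [v vZ]; rewrite -leqNgt => dv.
have := deg_gt0 vZ => d1.
case/VXP: vZ => g gZ vg.
have cg := cnt_pos vg; have cgl := deg_ge1 v gZ.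
have vn : v \notin VX (Z :\ g).
  apply/negP=> /VXP [h0 /setD1P [hg hZ] vh].
  have ne : g != h0 by rewrite eq_sym.
  have := deg_ge2 v gZ hZ ne; have := cnt_pos vh; lia.
have Z'0 : Z :\ g != set0.
  apply/negP=> /eqP Z'0.
  have cZ1 := cardsD1 g Z; rewrite gZ Z'0 cards0 in cZ1.
  have : #|endv g| <= 1.
    apply: leq_trans (subset_leq_card (endv_VX ends gZ)) _; lia.
  rewrite /Defs.endv cards2 ltnS leqn0 eqb0 negbK => /eqP e12.
  move: cg cgl dv; rewrite /cnt e12; move: vg; rewrite endvP e12 orbb => /eqP ->.
  rewrite eqxx; lia.
have cZ1 := cardsD1 g Z; rewrite gZ in cZ1.
have sub : VX (Z :\ g) \subset VX Z :\ v.
  apply/subsetP=> w wZ; rewrite in_setD1 (subsetP (VXS ends (subD1set Z g))) // andbT.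
  by apply/eqP=> wv; rewrite -wv wZ in vn.
have := subset_leq_card sub; have cv := cardsD1 v (VX Z).
rewrite (_ : v \in VX Z) in cv; last by apply/VXP; exists g.
move=> h2.
have e1 : #|Z :\ g| = n by lia.
have e2 : #|VX (Z :\ g)| <= #|Z :\ g| by lia.
have [Y YZ PY] := IH (Z :\ g) e1 Z'0 e2.
by exists Y => //; apply: subset_trans YZ (subD1set _ _).
Qed.

Lemma L_min (M : {set E}) : Pmd M -> (forall Z : {set E}, Z \proper M -> ~~ Pmd Z) -> is_cycle ends M.
Proof.
move=> /andP [M0 /forall_inP dM] min.
have d2 : forall v, v \in VX M -> deg M v = 2.
  move=> v vM; have := dM v vM; rewrite leq_eqVlt => /orP [/eqP //|d3].
  exfalso.
  have hs := handshake ends M.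
  have : \sum_(w in VX M) deg M w = \sum_(w in VX M) 2 + \sum_(w in VX M) (deg M w - 2).
    rewrite -big_split /=; apply: eq_bigr => w wM; rewrite subnKC //; exact: dM.
  rewrite hs sum_nat_const (bigD1 v) //= => h.
  have VM := VX_card0 ends M0.
  case/set0Pn: M0 => g gM.
  have cM := cardsD1 g M; rewrite gM in cM.
  have h1 : #|VX (M :\ g)| <= #|M :\ g|.
    apply: leq_trans (VX_sub_card ends (subD1set M g)) _; lia.
  have h0 : M :\ g != set0.
    rewrite -cards_eq0; lia.
  have [Z ZM PZ] := L_core h0 h1.
  by have /negP := min Z (sub_proper_trans ZM (properD1 gM)).
rewrite /is_cycle M0 /=; apply/andP; split; last first.
  by apply/forall_inP=> v vM; rewrite d2.
apply/forall_inP=> u uM; apply/forall_inP=> w wM.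
pose K := [set x | connect (vadj M) u x].
pose MK := [set x in M | (ends x).1 \in K].
have MKM : MK \subset M by apply/subsetP=> x; rewrite inE => /andP [].
have inK2 : forall x, x \in MK -> (ends x).2 \in K.
  by move=> x; rewrite !inE => /andP [xM]; rewrite connect_edge.
have MK0 : MK != set0.
  case/VXP: uM => g gM ug; apply/set0Pn; exists g; rewrite inE gM inE /=.
  move: ug; rewrite endvP => /orP [] /eqP <-; first exact: connect0.
  by rewrite connect_edge // connect0.
have eqMK : MK = M.
  apply/eqP; rewrite eqEproper MKM /=; apply/negP=> /min /negP; apply.
  rewrite /Pmd MK0 /=; apply/forall_inP=> v /VXP [x xMK vx].
  have vK : v \in K by move: vx; rewrite endvP => /orP [] /eqP <-;
    [move: xMK; rewrite inE => /andP [] | exact: inK2].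
  have -> : deg MK v = deg M v.
    rewrite !degE [LHS]big_mkcond [RHS]big_mkcond /=; apply: eq_bigr => y _.
    case yM: (y \in M); case yK: (y \in MK) => //.
      rewrite cnt0 //; apply/negP; rewrite endvP => /orP [] /eqP e1.
        by move: yK; rewrite inE yM e1 vK.
      have : y \in MK.
        by move: vK; rewrite !inE yM /= connect_edge // e1.
      by rewrite yK.
    by rewrite (subsetP MKM) in yM.
  apply: dM; apply/VXP; exists x => //; exact: (subsetP MKM).
have wMK : w \in VX MK by rewrite eqMK.
case/VXP: wMK => x xMK; rewrite endvP => /orP [] /eqP <-.
  by move: xMK; rewrite !inE => /andP [_ hh].
by have := inK2 x xMK; rewrite inE.
Qed.

Lemma cycle_exists (Z : {set E}) : Z != set0 -> #|VX Z| <= #|Z| ->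
  exists2 C : {set E}, C \subset Z & is_cycle ends C.
Proof.
move=> Z0 h; have [Z' Z'Z PZ'] := L_core Z0 h.
have exP : exists n, [exists M : {set E}, [&& M \subset Z', Pmd M & #|M| == n]].
  by exists #|Z'|; apply/existsP; exists Z'; rewrite subxx PZ' eqxx.
case: (ex_minnP exP) => n /existsP [M /and3P [MZ PM /eqP cn]] mn.
exists M; first exact: subset_trans MZ Z'Z.
apply: L_min => // Y pY; apply/negP=> PY.
have := mn #|Y|; rewrite -cn.
have -> : [exists M0 : {set E}, [&& M0 \subset Z', Pmd M0 & #|M0| == #|Y|]].
  apply/existsP; exists Y; rewrite PY eqxx andbT andbT.
  exact: subset_trans (proper_sub pY) MZ.
by move/(_ isT); have := proper_card pY; lia.
Qed.

Lemma cycle_ex (C : {set E}) : is_cycle ends C -> #|VX C| <= #|C|.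
Proof.
case/and3P=> _ _ /forall_inP d2.
have := handshake ends C; rewrite (eq_bigr (fun=> 2)) ?sum_nat_const; first lia.
by move=> v vC; apply/eqP; apply: d2.
Qed.

Lemma cycle_path (C : {set E}) e : is_cycle ends C -> e \in C ->
  connect (vadj (C :\ e)) (ends e).1 (ends e).2.
Proof.
move=> cC eC; case/and3P: (cC) => _ _ /forall_inP d2.
set a := (ends e).1; set b := (ends e).2.
have [->|ab] := eqVneq a b; first exact: connect0.
apply/negPn/negP=> nab.
pose C' := C :\ e.
pose K := [set x | connect (vadj C') a x].
have aK : a \in K by rewrite inE connect0.
have bK : b \notin K by rewrite inE.
have KC : forall x, x \in K -> x \in VX C.
  move=> x; rewrite inE => /connect_VX [->|].
    by apply/VXP; exists e => //; exact: endv1.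
  by apply: (subsetP (VXS ends (subD1set C e))).
have h1 : \sum_(x in K) deg C x = 2 * #|K|.
  rewrite (eq_bigr (fun=> 2)) ?sum_nat_const ?(mulnC 2) // => x xK.
  by apply/eqP; apply: d2; apply: KC.
have h2 : \sum_(x in K) deg C x = \sum_(x in K) deg C' x + 1.
  rewrite (eq_bigr (fun x => cnt e x + deg C' x)); last by move=> x _; exact: deg_sub.
  by rewrite big_split /= sum_cnt -/a -/b aK (negPf bK) addnC.
have h3 : \sum_(x in K) deg C' x = 2 * \sum_(g in C') ((ends g).1 \in K).
  under eq_bigr do rewrite degE.
  rewrite exchange_big /= big_distrr /=; apply: eq_bigr => g gC'.
  rewrite sum_cnt !inE connect_edge //; lia.
lia.
Qed.

End C.

Lemma VX_U1 (V E : finType) (ends : E -> V * V) x (Y : {set E}) :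
  VX ends (x |: Y) = endv ends x :|: VX ends Y.
Proof. by rewrite VXU /Defs.VX big_set1. Qed.

Lemma VX_disj (V E : finType) (ends : E -> V * V) (Y : {set E}) (W : {set V}) :
  (forall x v, x \in Y -> v \in endv ends x -> v \in W -> False) -> VX ends Y :&: W = set0.
Proof.
move=> h; apply/setP=> v; rewrite !inE; apply/negP=> /andP [/VXP [x xY vx] vW].
exact: h vx vW.
Qed.

Ltac slia :=
  repeat match goal with
  | H : is_true (_ <= _) |- _ => revert H
  | H : @eq nat _ _ |- _ => revert H
  | H : _ |- _ => clear H
  end; lia.

Theorem mainTheorem19 (V E : finType) (ends : E -> V * V) (k : nat)
  (hiso : no_isolated ends) (hk : 1 <= k) (hconn : mconnected ends k)
  (B : {set E}) (hB : base ends k B) (e : E) (he : e \in B) :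
  let A := comp_edges ends B e in
  (exists C : {set E}, [/\ C \subset A, is_cycle ends C, e \in C &
     forall C' : {set E}, C' \subset A -> is_cycle ends C' -> C' = C]) ->
  is_tree ends (VX ends A) (A :\ e) /\
  (let S := e |: [set u | (u \notin B) &&
               (((ends u).1 \in VX ends A) || ((ends u).2 \in VX ends A))] in
   cocircuit ends k S /\ S :&: B = [set e] /\
   forall K : {set E}, cocircuit ends k K -> K :&: B = [set e] -> K = S).
Proof.
move=> A [C [CA cC eC uniq]].
have [sB maxB] := (baseP ends hk B).1 hB.
set s := (ends e).1.
have inA : forall f, (f \in A) = (f \in B) && connect (vadj ends B) s (ends f).1.
  by move=> f; rewrite /A /comp_edges inE.
have AB : A \subset B by apply/subsetP=> f; rewrite inA => /andP [].
have eA : e \in A by rewrite inA he connect0.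
have CB : C \subset B := subset_trans CA AB.
have reachA : forall v, v \in VX ends A -> connect (vadj ends B) s v.
  move=> v /VXP [g gA]; rewrite endvP => /orP [] /eqP <-; move: gA; rewrite inA => /andP [gB h] //.
  by rewrite -connect_edge.
have CL : forall f v, f \in B -> f \notin A -> v \in endv ends f -> v \in VX ends A -> False.
  move=> f v fB fA vf /reachA h; move/negP: fA; apply; rewrite inA fB /=.
  by move: vf; rewrite endvP => /orP [] /eqP hv; [rewrite hv | rewrite connect_edge // hv].
have F : forall Z : {set E}, Z \subset A :\ e -> Z != set0 -> #|Z| < #|VX ends Z|.
  move=> Z ZA Z0; rewrite ltnNge; apply/negP=> h.
  have [C' C'Z cC'] := cycle_exists Z0 h.
  have C'A : C' \subset A :\ e := subset_trans C'Z ZA.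
  have := uniq C' (subset_trans C'A (subD1set _ _)) cC'; move=> eqC.
  by move: (subsetP C'A e); rewrite eqC eC !inE eqxx => /(_ isT).
have U : forall Z : {set E}, Z \subset A -> #|Z| <= #|VX ends Z|.
  move=> Z ZA; have cZ := cardsD1 e Z.
  have ZeA : Z :\ e \subset A :\ e by apply: setSD.
  have [Z0|Z0] := eqVneq (Z :\ e) set0.
    rewrite Z0 cards0 in cZ.
    have [->|ZZ] := eqVneq Z set0; first by rewrite cards0.
    have := VX_card0 ends ZZ; case: (e \in Z) cZ; slia.
  have := F _ ZeA Z0; have := VX_sub_card ends (subD1set Z e); case: (e \in Z) cZ; slia.
have exC := cycle_ex cC.
split.
  apply/and3P; split.
  - by apply: VXS; apply: subD1set.
  - pose K2 := [set x | connect (vadj ends (A :\ e)) s x].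
    have AeB : A :\ e \subset B := subset_trans (subD1set _ _) AB.
    have dir : forall x y, vadj ends B x y -> x \in K2 -> y \in K2.
      move=> x y /vadjP [g gB hg]; rewrite !inE => hx.
      have hxB := connect_mono AeB hx.
      have gA : g \in A.
        rewrite inA gB /=; case: hg => -[h1 h2]; first by rewrite h1.
        by rewrite connect_edge // h2.
      have [ge|ge] := eqVneq g e.
        have cp := connect_mono (setSD [set e] CA) (cycle_path cC eC).
        have csym := sym_connect_sym (vadj_sym ends (A :\ e)).
        rewrite ge in hg; case: hg => -[h1 h2].
          by apply: connect_trans hx _; rewrite -h1 -h2.
        by apply: connect_trans hx _; rewrite csym -h1 -h2.
      have gAe : g \in A :\ e by rewrite in_setD1 ge gA.
      apply: connect_trans hx (connect1 _).
      by case: hg => -[h1 h2]; [rewrite -h1 -h2 | rewrite vadj_sym -h1 -h2]; apply: vadj_edge.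
    have cl : closed (vadj ends B) K2.
      move=> x y hxy; apply/idP/idP; first exact: dir.
      by apply: dir; rewrite vadj_sym.
    have sK : s \in K2 by rewrite inE connect0.
    have reach : forall x, x \in VX ends A -> connect (vadj ends (A :\ e)) s x.
      move=> x /reachA hx; have := closed_connect cl hx; rewrite sK inE; by move<-.
    have csym := sym_connect_sym (vadj_sym ends (A :\ e)).
    apply/forall_inP=> u uA; apply/forall_inP=> w wA.
    by apply: connect_trans (reach w wA); rewrite csym; apply: reach.
  - apply/forallP=> C'; apply/implyP=> C'A; apply/negP=> cC'.
    have := uniq C' (subset_trans C'A (subD1set _ _)) cC'; move=> eqC.
    by move: (subsetP C'A e); rewrite eqC eC !inE eqxx => /(_ isT).
move=> S.
have inS : forall x, (x \in S) = (x == e) || ((x \notin B) &&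
    (((ends x).1 \in VX ends A) || ((ends x).2 \in VX ends A))).
  by move=> x; rewrite !inE.
have eS : e \in S by rewrite inS eqxx.
have SB : S :&: B = [set e].
  apply/setP=> x; rewrite in_setI inS in_set1; case: eqP => [->|_]; first by rewrite he.
  by case: (x \in B); rewrite /= ?andbF.
have Su : forall u, u \in S -> u != e -> u \notin B /\ exists2 v, v \in endv ends u & v \in VX ends A.
  move=> u; rewrite inS => /orP [/eqP -> |]; first by rewrite eqxx.
  case/andP=> uB h _; split => //; case/orP: h => h; [exists (ends u).1 | exists (ends u).2] => //.
    exact: endv1.
  exact: endv2.
have P1 : forall u, u \in S -> u != e -> base ends k (u |: (B :\ e)).
  move=> u uS ue; have [uB [v vu vA]] := Su u uS ue.
  apply/(baseP ends hk); split.
  + move=> X XB'; rewrite ltnNge; apply/negP=> hX.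
    case uX : (u \in X); last first.
      have XB : X \subset B.
        apply/subsetP=> x xX; move: (subsetP XB' x xX); rewrite !inE.
        case: eqP => [xu|_] /=; first by rewrite -xu xX in uX.
        by case/andP.
      by have := sB X XB; rewrite ltnNge hX.
    pose X0 := X :\ u.
    have X0B : X0 \subset B :\ e.
      apply/subsetP=> x /setD1P [xu xX]; move: (subsetP XB' x xX).
      by rewrite in_setU1 (negPf xu).
    pose X0A := X0 :&: A. pose X0R := X0 :\: A.
    have X0AA : X0A \subset A :\ e.
      apply/subsetP=> x; rewrite inE => /andP [/(subsetP X0B)]; rewrite !inE.
      by case/andP=> -> _ ->.
    have X0RB : X0R \subset B.
      apply/subsetP=> x; rewrite inE => /andP [_ /(subsetP X0B)]; rewrite inE; by case/andP.
    have c1 : #|X| = 1 + #|X0A| + #|X0R|.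
      have := cardsD1 u X; rewrite uX; have := cardsID A X0; rewrite /X0A /X0R -/X0.
      move=> h1 h2; rewrite h2 -h1; clear; slia.
    have dj : VX ends X0R :&: VX ends A = set0.
      apply: VX_disj => x w xR wx wA; move: xR; rewrite inE => /andP [xA /(subsetP X0B)].
      rewrite inE => /andP [_ xB]; exact: CL xB xA wx wA.
    have h1 : #|X0A| + 1 <= #|VX ends X0A :|: [set v]|.
      have [->|X0A0] := eqVneq X0A set0; first by rewrite VX0 set0U cards0 cards1.
      have := F _ X0AA X0A0; have := subset_leq_card (subsetUl (VX ends X0A) [set v]); slia.
    have dj2 : VX ends X0R :&: (VX ends X0A :|: [set v]) = set0.
      apply/setP=> w; rewrite inE in_set0; apply/negP=> /andP [wR wA'].
      have : w \in VX ends X0R :&: VX ends A.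
        rewrite inE wR /=; move: wA'; rewrite inE => /orP [|/set1P ->//].
        by apply: (subsetP (VXS ends _)); apply: (subset_trans X0AA (subD1set _ _)).
      by rewrite dj inE.
    have h2 : #|VX ends X0R| + #|VX ends X0A :|: [set v]| <= #|VX ends X|.
      rewrite -cardsUI dj2 cards0 addn0; apply: subset_leq_card.
      rewrite !subUset !VXS ?sub1set //.
      * by apply/VXP; exists u.
      * by apply: subset_trans (subsetIl _ _) (subD1set _ _).
      * by apply: subset_trans (subsetDl _ _) (subD1set _ _).
    have := sB _ X0RB; slia.
  + move=> I sI; apply/negP=> /properP [B'I [f fI fB']].
    have uI : u \in I by apply: (subsetP B'I); rewrite setU11.
    have fu : f != u by apply/eqP=> fu; rewrite fu setU11 in fB'.
    have [fe|fe] := eqVneq f e.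
      have BI : B \subset I.
        apply/subsetP=> x xB; case: (eqVneq x e) => [->|xe]; first by rewrite -fe.
        by apply: (subsetP B'I); rewrite !inE xe xB orbT.
      have := maxB I sI; apply/negP/negPn; apply/properP; split => //; by exists u.
    have fB : f \notin B by move: fB'; rewrite !inE (negPf fu) fe /= .
    have ns : forall g, g \notin B -> ~ sparse ends k (g |: B).
      move=> g gB sg; have := maxB _ sg; apply/negP/negPn; apply/properP.
      by split; [apply: subsetUr | exists g; rewrite ?setU11].
    have [Tf [TfB fTf hTf]] := tight_span hk sB (ns f fB).
    have [Tu [TuB uTu hTu]] := tight_span hk sB (ns u uB).
    have hT := tight_union hk sB TfB TuB hTf hTu.
    set T := Tf :|: Tu in hT.
    have TB : T \subset B by rewrite subUset TfB.
    pose T' := T :|: C.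
    have T'B : T' \subset B by rewrite subUset TB.
    have hT' : #|VX ends T'| + k <= #|T'| + 1.
      rewrite /T'; have := cardsUI T C; have := VX_submod ends T C.
      have := U (T :&: C) (subset_trans (subsetIr _ _) CA); slia.
    pose X' := u |: (f |: (T' :\ e)).
    have eT' : e \in T' by rewrite inE eC orbT.
    have cX' : #|X'| = #|T'| + 1.
      have uT : u \notin T' :\ e.
        by apply/negP=> /(subsetP (subset_trans (subD1set _ _) T'B)); rewrite (negPf uB).
      have fT : f \notin T' :\ e.
        by apply/negP=> /(subsetP (subset_trans (subD1set _ _) T'B)); rewrite (negPf fB).
      have uf : u \notin f |: (T' :\ e) by rewrite in_setU1 negb_or eq_sym fu uT.
      rewrite /X' cardsU1 uf cardsU1 fT.
      have := cardsD1 e T'; rewrite eT'; slia.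
    have VX' : VX ends X' \subset VX ends T'.
      rewrite /X' !VX_U1.
      have T'T : VX ends Tf :|: VX ends Tu \subset VX ends T'.
        by rewrite -VXU; apply: VXS; rewrite /T' /T subsetUl.
      apply/subsetP=> w /setUP [wu|/setUP [wf|we]].
      - by apply: (subsetP T'T); apply/setUP; right; apply: (subsetP uTu).
      - by apply: (subsetP T'T); apply/setUP; left; apply: (subsetP fTf).
      - by move: we; apply/subsetP; apply: VXS; apply: subD1set.
    have X'I : X' \subset I.
      rewrite /X' !subUset !sub1set uI fI /=.
      apply: subset_trans B'I; apply/subsetP=> x /setD1P [xe xT].
      by rewrite !inE xe (subsetP T'B) // orbT.
    have := sI X' X'I; have := subset_leq_card VX'; slia.
have P2 : forall B' : {set E}, base ends k B' -> S :&: B' != set0.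
  move=> B' hB'; apply/negP=> /eqP SB'.
  have [sB' maxB'] := (baseP ends hk B').1 hB'.
  have eB' : e \notin B'.
    apply/negP=> eB'; have : e \in S :&: B' by rewrite in_setI eS eB'.
    by rewrite SB' in_set0.
  have ns : ~ sparse ends k (e |: B').
    move=> sg; have := maxB' _ sg; apply/negP/negPn; apply/properP.
    by split; [apply: subsetUr | exists e; rewrite ?setU11].
  have [X XeB hX] := not_sparse ns.
  pose X1 := X :&: A. pose X2 := X :\: A.
  have X2B' : X2 \subset B'.
    apply/subsetP=> x; rewrite inE => /andP [xA xX]; move: (subsetP XeB x xX); rewrite !inE.
    by case: eqP => [xe|] //=; rewrite xe eA in xA.
  have c1 : #|X| = #|X1| + #|X2| by rewrite cardsID.
  have u1 := U X1 (subsetIr _ _).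
  have dj : VX ends X2 :&: VX ends X1 = set0.
    apply/setP=> w; rewrite inE in_set0; apply/negP=> /andP [wX2 wX1].
    have wA : w \in VX ends A by apply: (subsetP (VXS ends (subsetIr X A))).
    case/VXP: wX2 => x xX2 wx.
    have xB' := subsetP X2B' x xX2.
    move: xX2; rewrite inE => /andP [xA _].
    case xB : (x \in B); first by apply: (CL x w).
    have : x \in S :&: B'.
      rewrite in_setI xB' andbT inS xB /=.
      by move: wx; rewrite endvP => /orP [] /eqP ->; rewrite wA ?orbT.
    by rewrite SB' inE.
  have eqVX : VX ends X = VX ends X2 :|: VX ends X1 by rewrite -VXU setUC setID.
  have := cardsUI (VX ends X2) (VX ends X1); rewrite dj cards0 -eqVX.
  have := sB' X2 X2B'; slia.
have cS : cocircuit ends k S.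
  apply/andP; split.
    apply/andP; split; first by apply/set0Pn; exists e.
    by apply/forallP=> B'; apply/implyP; apply: P2.
  apply/forallP=> D; apply/implyP=> /properP [DS [u uS uD]].
  rewrite /meets_all_bases negb_and; apply/orP; right; apply/forallPn.
  case eD : (e \in D).
    have ue : u != e by apply/eqP=> ue; rewrite ue eD in uD.
    exists (u |: (B :\ e)); rewrite negb_imply P1 //= negbK.
    apply/eqP/setP=> x; rewrite in_set0; apply/negP=> /setIP [xD /setU1P [xu|/setD1P [xe xB]]].
      by rewrite xu (negPf uD) in xD.
    have : x \in S :&: B by rewrite in_setI xB (subsetP DS).
    by rewrite SB in_set1 (negPf xe).
  exists B; rewrite negb_imply hB /= negbK.
  apply/eqP/setP=> x; rewrite in_set0; apply/negP=> /setIP [xD xB].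
  have : x \in S :&: B by rewrite in_setI xB (subsetP DS).
  by rewrite SB in_set1 => /eqP xe; rewrite -xe xD in eD.
split => //; split => // K cK KB.
have SK : S \subset K.
  apply/subsetP=> u uS; case: (eqVneq u e) => [->|ue].
    have : e \in K :&: B by rewrite KB in_set1.
    by case/setIP.
  move: cK => /andP [/andP [_ /forallP /(_ (u |: (B :\ e))) /implyP hh] _].
  move: (hh (P1 u uS ue)) => /set0Pn [x] /setIP [xK /setU1P [<- //|/setD1P [xe xB]]].
  have : x \in K :&: B by rewrite in_setI xK.
  by rewrite KB in_set1 (negPf xe).
apply/eqP; rewrite eq_sym eqEproper SK /=; apply/negP=> pSK.
move: cK => /andP [_ /forallP /(_ S)]; rewrite pSK /=.
by case/andP: cS => ->.
Qed.
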